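(* Let $F$ be a finitary set functor with a presentation $\varepsilon\colon H_\Sigma\to F$, let $X\neq\emptyset$ be a set and choose $p'\in\Sigma_0\cup X$. Then the free algebra $\Phi X$ and the free completely iterative algebra $\Psi X$ on $X$, both ordered by cutting, have the same conservative completion (i.e. there is a cpo $C$ and an order embedding $j\colon\Psi X\to C$ such that $(C,j)$ is a conservative completion of $\Psi X$ and $(C,j\cdot m_X)$ is a conservative completion of $\Phi X$). Moreover, ordering $F(\Phi X)+X$ so that $\varphi_X$ is an order isomorphism and $F(\Psi X)+X$ so that $\tau_X^{-1}$ is one, $\tau_X^{-1}$ is the unique continuous map $g\colon F(\Psi X)+X\to\Psi X$ with $g\cdot(Fm_X+\mathrm{id}_X)=m_X\cdot\varphi_X$.
   Context: Finitary: preserves filtered colimits. $(\Phi X,\varphi_X\colon F(\Phi X)+X\to\Phi X)$ is the initial algebra of $F(-)+X$ (= free $F$-algebra on $X$); $(\Psi X,\tau_X\colon\Psi X\to F(\Psi X)+X)$ is the terminal coalgebra of $F(-)+X$, which is the free completely iterative $F$-algebra on $X$. $m_X\colon\Phi X\to\Psi X$ is the unique coalgebra homomorphism from $(\Phi X,\varphi_X^{-1})$ to $(\Psi X,\tau_X)$ (injective). Presentation: finitary signature $\Sigma$, $H_\Sigma Y=\coprod_n\Sigma_n\times Y^n$, natural $\varepsilon\colon H_\Sigma\to F$ with surjective components; $\varepsilon+\mathrm{id}_X$ presents $F(-)+X$ by the signature $\Sigma+X$ (elements of $X$ nullary). $\Sigma$-trees over $X$: ordered rooted trees labelled in $\Sigma+X$,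 a node labelled in $\Sigma_n$ having $n$ children, elements of $X$ only at leaves; $\Psi_\Sigma X$ = all of them (with $\tau'_X$ = inverse of tree tupling), $\Phi_\Sigma X$ = finite ones. $\partial'_ns$: delete nodes of height $>n$ and relabel nodes of height $n$ by $p'$. $h_X\colon\Phi_\Sigma X\to\Phi X$: the unique homomorphism of $(H_\Sigma(-)+X)$-algebras into $(\Phi X,\varphi_X\cdot(\varepsilon_{\Phi X}+\mathrm{id}))$; $\sim$ its kernel; $s\sim^*s'$ iff $\partial'_ns\sim\partial'_ns'$ for all $n$. $\hat k_X\colon\Psi_\Sigma X\to\Psi X$: the unique coalgebra homomorphism for $F(-)+X$ from $(\Psi_\Sigma X,(\varepsilon+\mathrm{id})\tau'_X)$; surjective with kernel $\sim^*$. Order by cutting on $\Psi X$: $x\le y$ iff $x=y$ or $x=\hat k_X(s)$, $y=\hat k_X(s')$ with $s\sim^*\partial'_ns'$ for some $n$. $\Phi X$ has the order induced via $m_X$. Continuous = monotone and preserving existing directed joins. A conservative completion of a poset $P$ is a cpo containing $P$ as a subposet closed under existing directed joins such that every continuous map from $P$ into a cpo extends uniquely to a continuous map on it. *)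

(* Defs.v *)
From Stdlib Require Import List.
From Stdlib Require Vectors.Fin.
Set Implicit Arguments.

Record SetFunctor := {
  Fob :> Type -> Type;
  fmap : forall A B : Type, (A -> B) -> Fob A -> Fob B;
  fmap_id : forall (A : Type) (x : Fob A), fmap (fun a : A => a) x = x;
  fmap_comp : forall (A B C : Type) (f : A -> B) (g : B -> C) (x : Fob A),
      fmap (fun a => g (f a)) x = fmap g (fmap f x) }.
Arguments fmap _ {A B} f x.

(* finitary set functor: every element of F A lies in the image of F of the
   inclusion of a finite subset (standard characterization, for set functors,
   of preservation of filtered colimits) *)
Definition finitary (F : SetFunctor) : Prop :=
  forall (A : Type) (x : F A),
    exists (l : list A) (y : F {a : A | In a l}),
      x = fmap F (@proj1_sig A (fun a => In a l)) y.

Definition sumap {A B C D : Type} (f : A -> C) (g : B -> D) (z : A + B) : C + D :=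
  match z with inl a => inl (f a) | inr b => inr (g b) end.

(* a finitary signature: Sig n = Sigma_n, the n-ary operation symbols *)
Definition HSig (Sig : nat -> Type) (Y : Type) : Type :=
  {n : nat & (Sig n * (Fin.t n -> Y))%type}.

Definition Hmap {Sig : nat -> Type} {Y Z : Type} (f : Y -> Z) (t : HSig Sig Y)
  : HSig Sig Z :=
  match t with existT _ n (s, v) => existT _ n (s, fun i => f (v i)) end.

Definition presentation (Sig : nat -> Type) (F : SetFunctor)
    (eps : forall Y : Type, HSig Sig Y -> F Y) : Prop :=
  (forall (Y Z : Type) (f : Y -> Z) (t : HSig Sig Y),
      eps Z (Hmap f t) = fmap F f (eps Y t)) /\
  (forall (Y : Type) (y : F Y), exists t : HSig Sig Y, eps Y t = y).

Definition initial_algebra (F : SetFunctor) (X P : Type) (phi : F P + X -> P) : Prop :=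
  forall (A : Type) (a : F A + X -> A),
    (exists f : P -> A, forall z, f (phi z) = a (sumap (fmap F f) (fun x => x) z)) /\
    (forall f g : P -> A,
        (forall z, f (phi z) = a (sumap (fmap F f) (fun x => x) z)) ->
        (forall z, g (phi z) = a (sumap (fmap F g) (fun x => x) z)) ->
        forall p, f p = g p).

Definition terminal_coalgebra (F : SetFunctor) (X P : Type) (tau : P -> F P + X) : Prop :=
  forall (A : Type) (a : A -> F A + X),
    (exists f : A -> P, forall z, tau (f z) = sumap (fmap F f) (fun x => x) (a z)) /\
    (forall f g : A -> P,
        (forall z, tau (f z) = sumap (fmap F f) (fun x => x) (a z)) ->
        (forall z, tau (g z) = sumap (fmap F g) (fun x => x) (a z)) ->
        forall p, f p = g p).

Inductive ftree (Sig : nat -> Type) (X : Type) : Type :=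
| FLeaf : X -> ftree Sig X
| FNode : forall n : nat, Sig n -> (Fin.t n -> ftree Sig X) -> ftree Sig X.

CoInductive itree (Sig : nat -> Type) (X : Type) : Type :=
| ILeaf : X -> itree Sig X
| INode : forall n : nat, Sig n -> (Fin.t n -> itree Sig X) -> itree Sig X.

Arguments FLeaf {Sig X} x.
Arguments FNode {Sig X n} s ts.
Arguments ILeaf {Sig X} x.
Arguments INode {Sig X n} s ts.

Definition tau' {Sig : nat -> Type} {X : Type} (t : itree Sig X)
  : HSig Sig (itree Sig X) + X :=
  match t with
  | ILeaf x => inr x
  | @INode _ _ n s ts => inl (existT _ n (s, ts))
  end.

Fixpoint emb {Sig : nat -> Type} {X : Type} (t : ftree Sig X) : itree Sig X :=
  match t with
  | FLeaf x => ILeaf x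
  | @FNode _ _ n s ts => INode s (fun i => emb (ts i))
  end.

Definition single {Sig : nat -> Type} {X : Type} (p' : Sig 0 + X) : ftree Sig X :=
  match p' with
  | inl s => FNode s (fun i : Fin.t 0 => Fin.case0 (fun _ => ftree Sig X) i)
  | inr x => FLeaf x
  end.

(* partial' n s : delete nodes of height > n, relabel nodes of height n by p'
   (root has height 0) *)
Fixpoint cut {Sig : nat -> Type} {X : Type} (p' : Sig 0 + X) (n : nat)
    (t : itree Sig X) : ftree Sig X :=
  match n with
  | 0 => single p'
  | S n' =>
      match t with
      | ILeaf x => FLeaf x
      | @INode _ _ _ s ts => FNode s (fun i => cut p' n' (ts i))
      end
  end.

(* h_X : Phi_Sigma X -> Phi X, the unique (H_Sigma(-)+X)-algebra homomorphism
   into (Phi X, phi_X . (eps + id)) *)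
Fixpoint hX {Sig : nat -> Type} {F : SetFunctor} {X P : Type}
    (eps : forall Y : Type, HSig Sig Y -> F Y) (phi : F P + X -> P)
    (t : ftree Sig X) : P :=
  match t with
  | FLeaf x => phi (inr x)
  | @FNode _ _ n s ts => phi (inl (eps P (existT _ n (s, fun i => hX eps phi (ts i)))))
  end.

Definition simstar {Sig : nat -> Type} {F : SetFunctor} {X P : Type}
    (eps : forall Y : Type, HSig Sig Y -> F Y) (phi : F P + X -> P)
    (p' : Sig 0 + X) (s s' : itree Sig X) : Prop :=
  forall n, hX eps phi (cut p' n s) = hX eps phi (cut p' n s').

Definition cut_le {Sig : nat -> Type} {F : SetFunctor} {X P Q : Type}
    (eps : forall Y : Type, HSig Sig Y -> F Y) (phi : F P + X -> P)
    (p' : Sig 0 + X) (khat : itree Sig X -> Q) (x y : Q) : Prop :=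
  x = y \/
  exists (s s' : itree Sig X) (n : nat),
    x = khat s /\ y = khat s' /\ simstar eps phi p' s (emb (cut p' n s')).

Definition poset {P : Type} (le : P -> P -> Prop) : Prop :=
  (forall a, le a a) /\ (forall a b c, le a b -> le b c -> le a c) /\
  (forall a b, le a b -> le b a -> a = b).

Definition directed {P : Type} (le : P -> P -> Prop) (D : P -> Prop) : Prop :=
  (exists d, D d) /\
  (forall a b, D a -> D b -> exists c, D c /\ le a c /\ le b c).

Definition is_lub {P : Type} (le : P -> P -> Prop) (D : P -> Prop) (x : P) : Prop :=
  (forall d, D d -> le d x) /\ (forall u, (forall d, D d -> le d u) -> le x u).

(* cpo = poset with joins of all directed subsets (no least element required) *)
Definition cpo {P : Type} (le : P -> P -> Prop) : Prop :=
  poset le /\ forall D, directed le D -> exists x, is_lub le D x.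

Definition monotone {P Q : Type} (leP : P -> P -> Prop) (leQ : Q -> Q -> Prop)
    (f : P -> Q) : Prop :=
  forall a b, leP a b -> leQ (f a) (f b).

Definition image {P Q : Type} (f : P -> Q) (D : P -> Prop) : Q -> Prop :=
  fun q => exists d, D d /\ f d = q.

Definition continuous {P Q : Type} (leP : P -> P -> Prop) (leQ : Q -> Q -> Prop)
    (f : P -> Q) : Prop :=
  monotone leP leQ f /\
  forall D x, directed leP D -> is_lub leP D x -> is_lub leQ (image f D) (f x).

Definition conservative_completion {P C : Type} (leP : P -> P -> Prop)
    (leC : C -> C -> Prop) (j : P -> C) : Prop :=
  cpo leC /\
  (forall a b, j a = j b -> a = b) /\
  (forall a b, leP a b <-> leC (j a) (j b)) /\
  (forall D x, directed leP D -> is_lub leP D x -> is_lub leC (image j D) (j x)) /\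
  (forall (Q : Type) (leQ : Q -> Q -> Prop), cpo leQ ->
     forall f : P -> Q, continuous leP leQ f ->
       exists g : C -> Q,
         continuous leC leQ g /\ (forall a, g (j a) = f a) /\
         (forall g' : C -> Q, continuous leC leQ g' -> (forall a, g' (j a) = f a) ->
            forall c, g' c = g c)).

(* Main.v *)
Require Import Defs.
From Stdlib Require Import List.
From Stdlib Require Vectors.Fin.
From Stdlib Require Import Arith Lia Classical ClassicalEpsilon FunctionalExtensionality PropExtensionality ProofIrrelevance.


Section Gen.
Context {P : Type} (le : P -> P -> Prop).

Lemma lub_unique (Hpo : poset le) D x y : is_lub le D x -> is_lub le D y -> x = y.
Proof. intros [H1 H2] [H3 H4]. destruct Hpo as (_&_&A). apply A; [apply H2|apply H4]; assumption. Qed.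

Lemma is_lub_ext D D' x : (forall a, D a <-> D' a) -> is_lub le D x -> is_lub le D' x.
Proof. intros E [H1 H2]. split.
  - intros d Hd. apply H1, E, Hd.
  - intros u Hu. apply H2. intros d Hd. apply Hu, E, Hd. Qed.

Lemma directed_ext D D' : (forall a, D a <-> D' a) -> directed le D -> directed le D'.
Proof. intros E [[d Hd] H2]. split. exists d; apply E; auto.
  intros a b Ha Hb. destruct (H2 a b) as (c&Hc&?&?); try apply E; auto. exists c; repeat split; auto; apply E; auto. Qed.

Lemma lub_of_max D x : D x -> (forall d, D d -> le d x) -> is_lub le D x.
Proof. intros Hx H. split; auto. Qed.

Lemma image_directed {Q} (leQ : Q -> Q -> Prop) (f : P -> Q) : monotone le leQ f -> forall D, directed le D -> directed leQ (image f D).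
Proof. intros Hm D [[d Hd] H2]. split. exists (f d), d; auto.
  intros a b (a'&Ha'&<-) (b'&Hb'&<-). destruct (H2 a' b') as (c&Hc&?&?); auto.
  exists (f c); split; [exists c; auto| split; apply Hm; auto]. Qed.
End Gen.

Lemma cont_comp {A B C} (leA : A -> A -> Prop) (leB : B -> B -> Prop) (leC : C -> C -> Prop) (f : A -> B) (g : B -> C) :
  continuous leA leB f -> continuous leB leC g -> continuous leA leC (fun a => g (f a)).
Proof. intros [Mf Lf] [Mg Lg]. split. intros a b H; apply Mg, Mf, H.
  intros D x HD Hx. pose proof (Lf D x HD Hx) as H1.
  pose proof (Lg _ _ (image_directed _ _ _ Mf D HD) H1) as H2.
  eapply is_lub_ext; [|exact H2]. intros q; split.
  - intros (b&(a&Ha&<-)&<-). exists a; auto.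
  - intros (a&Ha&<-). exists (f a); split; auto. exists a; auto. Qed.

Section Compl.
Context {P : Type} (le : P -> P -> Prop) (Hpo : poset le)
  (Hcmp : forall a b u, le a u -> le b u -> le a b \/ le b a).

Definition ideal (I : P -> Prop) := (exists a, I a) /\ (forall a b, I b -> le a b -> I a) /\
  (forall a b, I a -> I b -> exists c, I c /\ le a c /\ le b c).
Definition dclosed (I : P -> Prop) := forall D x, directed le D -> (forall d, D d -> I d) -> is_lub le D x -> I x.
Definition Cc := {I : P -> Prop | ideal I /\ dclosed I}.
Definition leCc (I J : Cc) := forall a, proj1_sig I a -> proj1_sig J a.

Lemma le_refl a : le a a. Proof. destruct Hpo as (A&_&_); auto. Qed.
Lemma le_trans a b c : le a b -> le b c -> le a c. Proof. destruct Hpo as (_&A&_); eauto. Qed.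
Lemma le_anti a b : le a b -> le b a -> a = b. Proof. destruct Hpo as (_&_&A); eauto. Qed.

Lemma down_ok y : ideal (fun z => le z y) /\ dclosed (fun z => le z y).
Proof. split. split; [exists y; apply le_refl|split].
  - intros a b H1 H2; eapply le_trans; eauto.
  - intros a b Ha Hb; exists y; repeat split; auto; apply le_refl.
  - intros D x HD HDy [H1 H2]. apply H2; auto. Qed.
Definition jj y : Cc := exist _ (fun z => le z y) (down_ok y).

Lemma Cc_eq (I J : Cc) : leCc I J -> leCc J I -> I = J.
Proof. destruct I as [I pI], J as [J pJ]; unfold leCc; simpl; intros H1 H2.
  assert (I = J). { apply functional_extensionality; intros a; apply propositional_extensionality; split; auto. }
  subst J. f_equal. apply proof_irrelevance. Qed.

Lemma Cc_poset : poset leCc.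
Proof. split; [|split]. intros a x; auto. intros a b c H1 H2 x Hx; auto. apply Cc_eq. Qed.

Definition Un (DD : Cc -> Prop) a := exists I, DD I /\ proj1_sig I a.

Lemma Cc_ideal (I : Cc) : ideal (proj1_sig I). Proof. exact (proj1 (proj2_sig I)). Qed.
Lemma Cc_dcl (I : Cc) : dclosed (proj1_sig I). Proof. exact (proj2 (proj2_sig I)). Qed.

Lemma Un_ideal DD : directed leCc DD -> ideal (Un DD).
Proof. intros [[I HI] H2]. destruct (Cc_ideal I) as [[a Ha] _]. split; [|split].
  - exists a, I; auto.
  - intros x y (J&HJ&Hy) Hxy. exists J; split; auto. destruct (Cc_ideal J) as [_ [Jd _]]; eauto.
  - intros x y (J1&H1&Hx) (J2&H2'&Hy). destruct (H2 J1 J2) as (J3&H3&L1&L2); auto.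
    destruct (Cc_ideal J3) as [_ [_ Jdir]]. destruct (Jdir x y) as (c&?&?&?); auto.
    exists c; split; auto. exists J3; auto.
Qed.

Lemma dir_lub_C DD : directed leCc DD -> exists K, is_lub leCc DD K /\
   forall k, proj1_sig K k -> Un DD k \/ exists x, is_lub le (Un DD) x /\ le k x.
Proof. intros HD. pose proof (Un_ideal DD HD) as HU.
  destruct (classic (exists x, is_lub le (Un DD) x)) as [[x Hx]|Hn].
  - exists (jj x). split; [split|].
    + intros I HI a Ha. simpl. apply (proj1 Hx). exists I; auto.
    + intros J HJ a Ha. simpl in Ha. destruct (Cc_ideal J) as [_ [Jd _]]. apply (Jd a x); auto.
      apply (Cc_dcl J (Un DD) x); auto. destruct HU as (A1&A2&A3). split; auto.
      intros d (I&HI&Hd). apply (HJ I HI d Hd).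
    + intros k Hk. right. exists x; auto.
  - assert (Hdir : directed le (Un DD)). { destruct HU as (A1&A2&A3); split; auto. }
    assert (HC : ideal (Un DD) /\ dclosed (Un DD)).
    { split; auto. intros D z HDd HDU Hz.
      destruct (classic (exists u, Un DD u /\ forall d, D d -> le d u)) as [(u&Hu&Hub)|Hno].
      - destruct HU as (_&A2&_). apply (A2 z u); auto. apply (proj2 Hz); auto.
      - exfalso. apply Hn. exists z. split.
        + intros u Hu. destruct (classic (exists d, D d /\ ~ le d u)) as [(d&Hd&Hnd)|Hall].
          * destruct Hdir as [_ Hd2]. destruct (Hd2 u d Hu (HDU d Hd)) as (c&_&L1&L2).
            destruct (Hcmp u d c L1 L2) as [L|L]; [|contradiction].
            eapply le_trans; [exact L|]. apply (proj1 Hz); auto.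
          * exfalso. apply Hno. exists u; split; auto. intros d Hd. apply NNPP; intros Hc; apply Hall; eauto.
        + intros w Hw. apply (proj2 Hz). intros d Hd. apply Hw; auto. }
    exists (exist _ (Un DD) HC). split; [split|].
    + intros I HI a Ha. simpl. exists I; auto.
    + intros J HJ a (I&HI&Ha). apply (HJ I HI a Ha).
    + intros k Hk. left; exact Hk.
Qed.

Lemma Cc_cpo : cpo leCc.
Proof. split. apply Cc_poset. intros DD HD. destruct (dir_lub_C DD HD) as (K&HK&_). eauto. Qed.

Lemma jj_lub D x : directed le D -> is_lub le D x -> is_lub leCc (image jj D) (jj x).
Proof. intros HD Hx. split.
  - intros I (d&Hd&<-) a Ha. simpl in *. eapply le_trans; [exact Ha|]. apply (proj1 Hx); auto.
  - intros J HJ a Ha. simpl in Ha. destruct (Cc_ideal J) as [_ [Jd _]]. apply (Jd a x); auto.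
    apply (Cc_dcl J D x); auto. intros d Hd. apply (HJ (jj d)). exists d; auto. simpl. apply le_refl.
Qed.

Lemma Cc_lub_downs (c : Cc) : directed leCc (image jj (proj1_sig c)) /\ is_lub leCc (image jj (proj1_sig c)) c.
Proof. destruct (Cc_ideal c) as ([a Ha]&Cd&Cdir). split; [split|split].
  - exists (jj a), a; auto.
  - intros I J (x&Hx&<-) (y&Hy&<-). destruct (Cdir x y Hx Hy) as (z&Hz&L1&L2).
    exists (jj z). split. exists z; auto. split; intros w Hw; simpl in *; eapply le_trans; eauto.
  - intros I (x&Hx&<-) w Hw. simpl in Hw. eauto.
  - intros J HJ w Hw. apply (HJ (jj w)). exists w; auto. simpl. apply le_refl.
Qed.

Lemma Cc_univ (Q : Type) (leQ : Q -> Q -> Prop) (HQ : cpo leQ) (f : P -> Q) (Hf : continuous le leQ f) :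
  exists g : Cc -> Q, continuous leCc leQ g /\ (forall a, g (jj a) = f a) /\
    (forall g' : Cc -> Q, continuous leCc leQ g' -> (forall a, g' (jj a) = f a) -> forall c, g' c = g c).
Proof. destruct HQ as [HQp HQs]. destruct Hf as [Mf Lf].
  assert (Hsup : forall c : Cc, exists x, is_lub leQ (image f (proj1_sig c)) x).
  { intros c. apply HQs. apply (image_directed le); auto. destruct (Cc_ideal c) as (A1&A2&A3); split; auto. }
  set (g := fun c => proj1_sig (constructive_indefinite_description _ (Hsup c))).
  assert (Hg : forall c, is_lub leQ (image f (proj1_sig c)) (g c)).
  { intros c. unfold g. destruct (constructive_indefinite_description _ (Hsup c)); auto. }
  assert (Hja : forall a, g (jj a) = f a).
  { intros a. eapply lub_unique; [exact HQp|apply Hg|]. apply lub_of_max. exists a; simpl; split; auto; apply le_refl.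
    intros q (z&Hz&<-). apply Mf; auto. }
  assert (Mg : monotone leCc leQ g).
  { intros I J HIJ. apply (proj2 (Hg I)). intros q (z&Hz&<-). apply (proj1 (Hg J)). exists z; auto. }
  exists g. split; [split|split]; auto.
  - intros DD K HD HK. destruct (dir_lub_C DD HD) as (K0&HK0&Hch).
    assert (K = K0) by (eapply lub_unique; eauto; apply Cc_poset). subst K0.
    split.
    + intros q (I&HI&<-). apply Mg. apply (proj1 HK); auto.
    + intros u Hu. apply (proj2 (Hg K)). intros q (k&Hk&<-).
      assert (Hfu : forall a, Un DD a -> leQ (f a) u).
      { intros a (I&HI&Ha). destruct HQp as (_&Qt&_). apply (Qt _ (g I)). apply (proj1 (Hg I)). exists a; auto.
        apply Hu. exists I; auto. }
      destruct (Hch k Hk) as [Hk'|(x&Hx&Hkx)]; auto.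
      destruct HQp as (_&Qt&_). apply (Qt _ (f x)). apply Mf; auto.
      assert (HdU : directed le (Un DD)). { destruct (Un_ideal DD HD) as (A1&A2&A3); split; auto. }
      apply (proj2 (Lf _ _ HdU Hx)). intros q' (a&Ha&<-). auto.
  - intros g' [Mg' Lg'] Hg' c. destruct (Cc_lub_downs c) as [Hd Hl].
    pose proof (Lg' _ _ Hd Hl) as H1. eapply lub_unique; [exact HQp|exact H1|].
    eapply is_lub_ext; [|apply Hg]. intros q; split.
    + intros (a&Ha&<-). exists (jj a). split. exists a; auto. auto.
    + intros (I&(a&Ha&<-)&<-). exists a; auto.
Qed.

Lemma Cc_conservative : conservative_completion le leCc jj.
Proof. split; [apply Cc_cpo|split; [|split; [|split]]].
  - intros a b E. assert (H1 : proj1_sig (jj a) a) by (simpl; apply le_refl).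
    assert (H2 : proj1_sig (jj b) b) by (simpl; apply le_refl).
    rewrite E in H1. rewrite <- E in H2. apply le_anti; auto.
  - intros a b; split. intros H z Hz; simpl in *; eapply le_trans; eauto.
    intros H. apply (H a). simpl; apply le_refl.
  - apply jj_lub.
  - intros Q leQ HQ f Hf. apply Cc_univ; auto.
Qed.

Lemma completion_exists : exists (C : Type) (leC : C -> C -> Prop) (j : P -> C), conservative_completion le leC j.
Proof. exists Cc, leCc, jj. apply Cc_conservative. Qed.
End Compl.

Lemma transfer {A P C : Type} (leA : A -> A -> Prop) (le : P -> P -> Prop) (leC : C -> C -> Prop)
  (m : A -> P) (j : P -> C) :
  conservative_completion le leC j ->
  (forall a b, m a = m b -> a = b) ->
  (forall a b, leA a b <-> le (m a) (m b)) ->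
  (forall D x, directed leA D -> is_lub leA D x -> is_lub le (image m D) (m x)) ->
  (forall (Q : Type) (leQ : Q -> Q -> Prop), cpo leQ -> forall f : A -> Q, continuous leA leQ f ->
     exists fh : P -> Q, continuous le leQ fh /\ (forall a, fh (m a) = f a) /\
       (forall h, continuous le leQ h -> (forall a, h (m a) = f a) -> forall y, h y = fh y)) ->
  conservative_completion leA leC (fun a => j (m a)).
Proof. intros (Hc&Hinj&Hiff&Hl&Hu) Hmi Hmiff Hml Hext. split; [auto|split; [|split; [|split]]].
  - intros a b E. apply Hmi, Hinj, E.
  - intros a b. rewrite Hmiff. apply Hiff.
  - intros D x HD Hx. pose proof (Hml D x HD Hx) as H1.
    assert (HmD : directed le (image m D)).
    { apply (image_directed leA); auto. intros a b; apply Hmiff. }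
    pose proof (Hl _ _ HmD H1) as H2. eapply is_lub_ext; [|exact H2]. intros c; split.
    + intros (p&(a&Ha&<-)&<-). exists a; auto.
    + intros (a&Ha&<-). exists (m a); split; auto. exists a; auto.
  - intros Q leQ HQ f Hf. destruct (Hext Q leQ HQ f Hf) as (fh&Hfh&Hfm&Hfu).
    destruct (Hu Q leQ HQ fh Hfh) as (g&Hg&Hgj&Hgu). exists g. split; [auto|split].
    + intros a. rewrite Hgj. auto.
    + intros g' Hg' Hg'f. apply Hgu; auto.
      * intros y. apply (Hfu (fun y => g' (j y))); auto.
        apply (cont_comp le leC leQ); auto. split. intros a b H; apply Hiff; auto. auto.
Qed.

Lemma fmap_ext (F : SetFunctor) {A B} (f g : A -> B) x : (forall a, f a = g a) -> fmap F f x = fmap F g x.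
Proof. intros H. assert (f = g) by (apply functional_extensionality; auto). subst; auto. Qed.

Lemma fmap_comp' (F : SetFunctor) {A B C} (f : A -> B) (g : B -> C) x :
  fmap F g (fmap F f x) = fmap F (fun a => g (f a)) x.
Proof. symmetry; apply fmap_comp. Qed.

Lemma fin_common (F : SetFunctor) (HF : finitary F) {A : Type} (u u' : F A) :
  exists (L : list A) (v v' : F {a : A | In a L}),
    u = fmap F (@proj1_sig A (fun a => In a L)) v /\ u' = fmap F (@proj1_sig A (fun a => In a L)) v'.
Proof. destruct (HF A u) as (l&w&Hw). destruct (HF A u') as (l'&w'&Hw').
  exists (l ++ l').
  exists (fmap F (fun s : {a | In a l} => exist (fun a => In a (l ++ l')) (proj1_sig s) (in_or_app _ _ _ (or_introl (proj2_sig s)))) w).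
  exists (fmap F (fun s : {a | In a l'} => exist (fun a => In a (l ++ l')) (proj1_sig s) (in_or_app _ _ _ (or_intror (proj2_sig s)))) w').
  split; [rewrite Hw|rewrite Hw']; rewrite fmap_comp'; simpl; reflexivity.
Qed.

Lemma maxnat (Q : nat -> Prop) N : (exists k, k <= N /\ Q k) -> exists k, k <= N /\ Q k /\ forall k', k' <= N -> Q k' -> k' <= k.
Proof. induction N as [|N IH]; intros (k&Hk&Qk).
  - exists 0. assert (k = 0) by lia. subst. repeat split; auto; lia.
  - destruct (classic (Q (S N))) as [HQ|HQ].
    + exists (S N); repeat split; auto.
    + assert (k <= N). { destruct (Nat.eq_dec k (S N)); [subst; contradiction|lia]. }
      destruct IH as (k0&H0&Q0&M0). exists k; auto. exists k0; repeat split; auto. intros k' Hk' Qk'.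
      destruct (Nat.eq_dec k' (S N)); [subst; contradiction|]. apply M0; auto; lia.
Qed.

Definition iunf {Sig X} (t : itree Sig X) : itree Sig X :=
  match t with ILeaf x => ILeaf x | INode s ts => INode s ts end.
Lemma iunf_eq {Sig X} (t : itree Sig X) : t = iunf t.
Proof. destruct t; reflexivity. Qed.

Section Main.
Variables (F : SetFunctor) (HF : finitary F) (Sig : nat -> Type)
  (eps : forall Y : Type, HSig Sig Y -> F Y) (Heps : @presentation Sig F eps)
  (X : Type) (p' : Sig 0 + X) (PhiX : Type) (phi : F PhiX + X -> PhiX)
  (Hphi : @initial_algebra F X PhiX phi)
  (PsiX : Type) (tau : PsiX -> F PsiX + X) (Htau : @terminal_coalgebra F X PsiX tau)
  (m : PhiX -> PsiX) (Hm : forall z, tau (m (phi z)) = sumap (fmap F m) (fun x => x) z).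

Lemma phi_iso : exists pinv : PhiX -> F PhiX + X, (forall z, pinv (phi z) = z) /\ (forall a, phi (pinv a) = a).
Proof. destruct (Hphi (F PhiX + X)%type (sumap (fmap F phi) (fun x => x))) as [[f Hf] _].
  assert (H1 : forall a, phi (f a) = a).
  { intros a. apply (proj2 (Hphi PhiX phi) (fun a => phi (f a)) (fun a => a)).
    - intros z. rewrite Hf. destruct z; simpl; auto. rewrite fmap_comp'. reflexivity.
    - intros z. destruct z; simpl; auto. rewrite fmap_id. reflexivity. }
  exists f. split; auto. intros z. rewrite Hf. destruct z; simpl; auto. rewrite fmap_comp'.
  f_equal. rewrite (fmap_ext F _ (fun a => a)); auto. apply fmap_id.
Qed.

Lemma tau_iso : exists tinv : F PsiX + X -> PsiX, (forall y, tinv (tau y) = y) /\ (forall w, tau (tinv w) = w).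
Proof. destruct (Htau (F PsiX + X)%type (sumap (fmap F tau) (fun x => x))) as [[f Hf] _].
  assert (H1 : forall y, f (tau y) = y).
  { intros y. apply (proj2 (Htau PsiX tau) (fun a => f (tau a)) (fun a => a)).
    - intros z. rewrite Hf. destruct (tau z); simpl; auto. rewrite fmap_comp'. reflexivity.
    - intros z. destruct (tau z); simpl; auto. rewrite fmap_id. reflexivity. }
  exists f. split; auto. intros w. rewrite Hf. destruct w; simpl; auto. rewrite fmap_comp'.
  f_equal. rewrite (fmap_ext F _ (fun a => a)); auto. apply fmap_id.
Qed.

Definition phiinv : PhiX -> F PhiX + X := proj1_sig (constructive_indefinite_description _ phi_iso).
Lemma phiinv_phi z : phiinv (phi z) = z.
Proof. unfold phiinv. destruct (constructive_indefinite_description _ phi_iso) as (f&H1&H2); simpl; auto. Qed.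
Lemma phi_phiinv a : phi (phiinv a) = a.
Proof. unfold phiinv. destruct (constructive_indefinite_description _ phi_iso) as (f&H1&H2); simpl; auto. Qed.
Definition tauinv : F PsiX + X -> PsiX := proj1_sig (constructive_indefinite_description _ tau_iso).
Lemma tauinv_tau y : tauinv (tau y) = y.
Proof. unfold tauinv. destruct (constructive_indefinite_description _ tau_iso) as (f&H1&H2); simpl; auto. Qed.
Lemma tau_tauinv w : tau (tauinv w) = w.
Proof. unfold tauinv. destruct (constructive_indefinite_description _ tau_iso) as (f&H1&H2); simpl; auto. Qed.
Lemma tau_inj y y' : tau y = tau y' -> y = y'.
Proof. intros H. rewrite <- (tauinv_tau y), <- (tauinv_tau y'), H; auto. Qed.
Lemma phi_inj z z' : phi z = phi z' -> z = z'.
Proof. intros H. rewrite <- (phiinv_phi z), <- (phiinv_phi z'), H; auto. Qed.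

Definition P0 : PhiX := hX eps phi (single p').

Fixpoint cutPhi (n : nat) (a : PhiX) : PhiX :=
  match n with
  | 0 => P0
  | S k => match phiinv a with inl u => phi (inl (fmap F (cutPhi k) u)) | inr x => phi (inr x) end
  end.
Fixpoint cutPsi (n : nat) (y : PsiX) : PhiX :=
  match n with
  | 0 => P0
  | S k => match tau y with inl u => phi (inl (fmap F (cutPsi k) u)) | inr x => phi (inr x) end
  end.

Lemma cutPhi_phi k z : cutPhi (S k) (phi z) =
  match z with inl u => phi (inl (fmap F (cutPhi k) u)) | inr x => phi (inr x) end.
Proof. simpl. rewrite phiinv_phi. reflexivity. Qed.

Lemma cutPhi_P0 k : cutPhi k P0 = P0.
Proof. destruct k as [|k]; auto. unfold P0. destruct p' as [s|x]; simpl single; simpl hX.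
  - rewrite cutPhi_phi. f_equal. f_equal. rewrite <- (proj1 Heps). simpl. f_equal. f_equal. f_equal.
    apply functional_extensionality. intros i. apply (Fin.case0 (fun i => _ = _) i).
  - rewrite cutPhi_phi. auto.
Qed.

Lemma cut_min k : forall n y, cutPhi k (cutPsi n y) = cutPsi (min k n) y.
Proof. induction k as [|k IH]; intros n y; auto. destruct n as [|n].
  - simpl (cutPsi 0 y). rewrite cutPhi_P0. auto.
  - simpl (min (S k) (S n)). simpl (cutPsi (S n) y). simpl (cutPsi (S (min k n)) y).
    destruct (tau y) as [u|x]; rewrite cutPhi_phi; auto.
    rewrite fmap_comp'. f_equal; f_equal. apply fmap_ext. intros; apply IH.
Qed.

Lemma cutPsi_m k : forall a, cutPsi k (m a) = cutPhi k a.
Proof. induction k as [|k IH]; intros a; auto. rewrite <- (phi_phiinv a). destruct (phiinv a) as [u|x]; rewrite cutPhi_phi; simpl; rewrite Hm; simpl; auto.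
  rewrite fmap_comp'. f_equal; f_equal. apply fmap_ext; auto.
Qed.

Definition dd n y := m (cutPsi n y).
Lemma C1 i n y : cutPsi i (dd n y) = cutPsi (min i n) y.
Proof. unfold dd. rewrite cutPsi_m, cut_min. auto. Qed.
Lemma D1 i n y : dd i (dd n y) = dd (min i n) y.
Proof. unfold dd at 1. rewrite C1. auto. Qed.

Definition E y y' := forall n, cutPsi n y = cutPsi n y'.
Definition Qt := {P : PsiX -> Prop | exists y, P = E y}.
Definition cls (y : PsiX) : Qt := exist _ (E y) (ex_intro _ y eq_refl).

Lemma cutPsi_mono N k a b : cutPsi N a = cutPsi N b -> k <= N -> cutPsi k a = cutPsi k b.
Proof. intros H Hk. replace k with (min k N) by lia. rewrite <- !cut_min, H. auto. Qed.

Lemma cls_eq y y' : E y y' -> cls y = cls y'.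
Proof. intros H. unfold cls. assert (E y = E y').
  { apply functional_extensionality; intros z; apply propositional_extensionality.
    unfold E in *; split; intros H' n; [rewrite <- H|rewrite H]; auto. }
  revert H0. generalize (ex_intro (fun y0 => E y = E y0) y eq_refl).
  generalize (ex_intro (fun y0 => E y' = E y0) y' eq_refl). intros e1 e2 H0.
  revert e1 e2. rewrite H0. intros e1 e2. f_equal. apply proof_irrelevance.
Qed.

Lemma cls_inj y y' : cls y = cls y' -> E y y'.
Proof. intros H. apply (f_equal (@proj1_sig _ _)) in H. simpl in H.
  assert (E y' y') by (intros n; auto). rewrite <- H in H0. auto. Qed.

Lemma stab_pairs (Lp : list (PsiX * PsiX)) : exists N, forall a b, In (a, b) Lp -> cutPsi N a = cutPsi N b -> E a b.
Proof. induction Lp as [|[a b] Lp IH].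
  - exists 0. intros a b [].
  - destruct IH as [N1 HN1]. destruct (classic (E a b)) as [Hab|Hab].
    + exists N1. intros a' b' [Heq|Hin] Hc; [inversion Heq; subst; auto|auto].
    + apply not_all_ex_not in Hab. destruct Hab as [n0 Hn0]. exists (max N1 n0).
      intros a' b' [Heq|Hin] Hc.
      * inversion Heq; subst. exfalso; apply Hn0. eapply cutPsi_mono; eauto; lia.
      * apply HN1; auto. eapply cutPsi_mono; eauto; lia.
Qed.

Lemma stab (L : list PsiX) : exists N, forall a b, In a L -> In b L -> cutPsi N a = cutPsi N b -> E a b.
Proof. destruct (stab_pairs (list_prod L L)) as [N HN]. exists N. intros a b Ha Hb. apply HN. apply in_prod; auto. Qed.

Lemma keyK y y' : E y y' -> sumap (fmap F cls) (fun x => x) (tau y) = sumap (fmap F cls) (fun x => x) (tau y').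
Proof. intros H. assert (Hn : forall n, cutPsi (S n) y = cutPsi (S n) y') by (intros; apply H).
  simpl in Hn. destruct (tau y) as [u|x], (tau y') as [u'|x'].
  - assert (Hn' : forall n, fmap F (cutPsi n) u = fmap F (cutPsi n) u').
    { intros n. specialize (Hn n). apply phi_inj in Hn. injection Hn; auto. }
    simpl. f_equal. destruct (fin_common F HF u u') as (L&v&v'&Hv&Hv').
    destruct (stab L) as [N HN].
    set (h := fun p : PhiX => match excluded_middle_informative (exists a, In a L /\ cutPsi N a = p) with
                | left H => cls (proj1_sig (constructive_indefinite_description _ H)) | right _ => cls y end).
    assert (Hh : forall a, In a L -> h (cutPsi N a) = cls a).
    { intros a Ha. unfold h. destruct excluded_middle_informative as [H'|H'].
      - destruct (constructive_indefinite_description _ H') as (a'&Ha'&Hc); simpl. apply cls_eq. apply HN; auto.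
      - exfalso; apply H'; eauto. }
    assert (Hw : forall v0 : F {a | In a L}, fmap F cls (fmap F (@proj1_sig _ _) v0) = fmap F h (fmap F (cutPsi N) (fmap F (@proj1_sig _ _) v0))).
    { intros v0. rewrite !fmap_comp'. apply fmap_ext. intros [a Ha]; simpl. symmetry; apply Hh; auto. }
    rewrite Hv, Hv', !Hw, <- Hv, <- Hv', Hn'. auto.
  - specialize (Hn 0). apply phi_inj in Hn. discriminate.
  - specialize (Hn 0). apply phi_inj in Hn. discriminate.
  - specialize (Hn 0). apply phi_inj in Hn. injection Hn; intros; subst; auto.
Qed.

Lemma sep y y' : E y y' -> y = y'.
Proof. intros H.
  assert (Hr : forall q : Qt, exists y, proj1_sig q = E y) by (intros q; exact (proj2_sig q)).
  set (rep := fun q => proj1_sig (constructive_indefinite_description _ (Hr q))).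
  assert (Hrep : forall q, cls (rep q) = q).
  { intros q. unfold rep. destruct (constructive_indefinite_description _ (Hr q)) as (z&Hz); simpl.
    destruct q as [Pq pq]. unfold cls. simpl in Hz. subst Pq. f_equal. apply proof_irrelevance. }
  set (alpha := fun q => sumap (fmap F cls) (fun x => x) (tau (rep q))).
  assert (Hcls : forall z, alpha (cls z) = sumap (fmap F cls) (fun x => x) (tau z)).
  { intros z. unfold alpha. apply keyK. apply cls_inj. apply Hrep. }
  destruct (Htau Qt alpha) as [[f Hf] _].
  assert (Hid : forall z, f (cls z) = z).
  { intros z. apply (proj2 (Htau PsiX tau) (fun z => f (cls z)) (fun z => z)).
    - intros w. rewrite Hf, Hcls. destruct (tau w); simpl; auto. rewrite fmap_comp'. auto.
    - intros w. destruct (tau w); simpl; auto. rewrite fmap_id; auto. }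
  rewrite <- (Hid y), <- (Hid y'). f_equal. apply cls_eq; auto.
Qed.

Lemma fin_phi : forall a, exists N, forall k, N <= k -> cutPhi k a = a.
Proof.
  set (Pf := fun a => exists N, forall k, N <= k -> cutPhi k a = a).
  set (Sb := {a : PhiX | Pf a}).
  assert (Hcl : forall w : F Sb + X, Pf (phi (sumap (fmap F (@proj1_sig _ _)) (fun x => x) w))).
  { intros [w|x].
    - destruct (HF Sb w) as (l&wt&Hwt).
      assert (HL : exists N, forall s, In s l -> forall k, N <= k -> cutPhi k (proj1_sig s) = proj1_sig s).
      { clear Hwt wt. induction l as [|s l IH].
        - exists 0. intros s [].
        - destruct IH as [N1 H1]. destruct (proj2_sig s) as [Ns HNs]. exists (max N1 Ns).
          intros s' [<-|Hin] k Hk; [apply HNs; lia|apply H1; auto; lia]. }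
      destruct HL as [N HN]. exists (S N). intros k Hk. destruct k as [|k]; [lia|].
      simpl sumap. rewrite cutPhi_phi. f_equal. f_equal. rewrite Hwt. rewrite !fmap_comp'.
      apply fmap_ext. intros [s Hs]; simpl. apply HN; auto; lia.
    - exists 1. intros k Hk. destruct k as [|k]; [lia|]. simpl sumap. rewrite cutPhi_phi. auto. }
  set (alpha := fun w : F Sb + X => exist Pf _ (Hcl w) : Sb).
  destruct (Hphi Sb alpha) as [[f Hf] _].
  assert (Hid : forall a, proj1_sig (f a) = a).
  { intros a. apply (proj2 (Hphi PhiX phi) (fun a => proj1_sig (f a)) (fun a => a)).
    - intros z. rewrite Hf. unfold alpha; simpl. destruct z; simpl; auto. rewrite fmap_comp'. auto.
    - intros z. destruct z; simpl; auto. rewrite fmap_id; auto. }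
  intros a. rewrite <- (Hid a). exact (proj2_sig (f a)).
Qed.

Lemma m_inj a b : m a = m b -> a = b.
Proof. intros H. destruct (fin_phi a) as [N1 H1], (fin_phi b) as [N2 H2].
  rewrite <- (H1 (max N1 N2)), <- (H2 (max N1 N2)) by lia. rewrite <- !cutPsi_m, H. auto. Qed.


Definition le' (x y : PsiX) : Prop := x = y \/ exists n, x = dd n y.
Definition finp (y : PsiX) := exists N, dd N y = y.

Lemma fin_d n y : finp (dd n y).
Proof. exists n. rewrite D1, Nat.min_id. auto. Qed.
Lemma fin_m a : finp (m a).
Proof. destruct (fin_phi a) as [N HN]. exists N. unfold dd. rewrite cutPsi_m, HN; auto. Qed.

Lemma le'_refl x : le' x x. Proof. left; auto. Qed.
Lemma le'_trans x y z : le' x y -> le' y z -> le' x z.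
Proof. intros [->|[n ->]] [->|[k ->]].
  - left; auto.
  - right; exists k; auto.
  - right; exists n; auto.
  - right. exists (min n k). apply D1. Qed.
Lemma le'_anti x y : le' x y -> le' y x -> x = y.
Proof. intros [->|[n Hn]] [Hy|[k Hk]]; auto.
  apply sep. set (j := min n k).
  assert (Hx : x = dd j x). { rewrite Hn at 1. rewrite Hk. rewrite D1. auto. }
  assert (Ci : forall i, cutPsi i x = cutPsi (min i j) x). { intros i. rewrite Hx at 1. rewrite C1. auto. }
  intros i. rewrite Hk, C1, Ci, (Ci (min i k)). f_equal. unfold j; lia.
Qed.
Lemma le'_poset : poset le'.
Proof. split; [apply le'_refl|split; [apply le'_trans|apply le'_anti]]. Qed.

Lemma le'_cmp a b u : le' a u -> le' b u -> le' a b \/ le' b a.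
Proof. intros [->|[n ->]] [->|[k ->]].
  - left; left; auto.
  - right; right; exists k; auto.
  - left; right; exists n; auto.
  - destruct (Nat.le_ge_cases n k).
    + left; right; exists n. rewrite D1. f_equal; lia.
    + right; right; exists k. rewrite D1. f_equal; lia.
Qed.

Lemma fin_ge y N k : dd N y = y -> N <= k -> dd k y = y.
Proof. intros H Hk. transitivity (dd k (dd N y)); [rewrite H; auto|]. rewrite D1. rewrite Nat.min_r; auto. Qed.

Lemma maxfin u N (HN : dd N u = u) (D : PsiX -> Prop) : (exists x, D x) -> (forall x, D x -> le' x u) ->
  exists x0, D x0 /\ forall x, D x -> le' x x0.
Proof. intros [x Hx] Hle.
  assert (Hk : forall x, D x -> exists k, k <= N /\ x = dd k u).
  { intros z Hz. destruct (Hle z Hz) as [->|[n ->]].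
    - exists N; auto.
    - exists (min n N). split; [lia|]. rewrite <- D1, HN. auto. }
  destruct (maxnat (fun k => exists x, D x /\ x = dd k u) N) as (k0&Hk0&(x0&Hx0&E0)&M0).
  { destruct (Hk x Hx) as (k&?&?). exists k; split; eauto. }
  exists x0. split; auto. intros z Hz. destruct (Hk z Hz) as (k&Hkn&Ez).
  assert (k <= k0) by (apply M0; eauto). right. exists k. rewrite Ez, E0, D1. f_equal; lia.
Qed.

Lemma cutsup y N : (forall n, le' (dd n y) (dd N y)) -> dd N y = y.
Proof. intros H. apply sep. intros i. rewrite C1.
  assert (Hc : forall i, cutPsi i y = cutPsi i (dd i y)) by (intros; rewrite C1, Nat.min_id; auto).
  destruct (Nat.le_gt_cases i N) as [Hi|Hi]. { rewrite Nat.min_l; auto. }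
  rewrite Nat.min_r by lia. destruct (H i) as [Heq|[k Hk]].
  - rewrite (Hc i), Heq, C1, Nat.min_r by lia. auto.
  - rewrite D1 in Hk. set (j := min k N) in *.
    rewrite (Hc i), Hk, C1, Nat.min_r by (unfold j; lia).
    assert (cutPsi N y = cutPsi N (dd i y)) by (rewrite C1, Nat.min_l by lia; auto).
    rewrite H0, Hk, C1, Nat.min_r by (unfold j; lia). auto.
Qed.

Definition cutsP (y : PsiX) : PsiX -> Prop := fun z => exists n, z = dd n y.

Lemma cutsP_dir y : directed le' (cutsP y).
Proof. split. exists (dd 0 y), 0; auto.
  intros a b [n ->] [k ->]. exists (dd (max n k) y). split. exists (max n k); auto.
  split; right; [exists n|exists k]; rewrite D1; f_equal; lia.
Qed.

Lemma dens y : is_lub le' (cutsP y) y.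
Proof. split. { intros z [n ->]. right; eauto. }
  intros u Hu. assert (Hu' : forall n, le' (dd n y) u) by (intros n; apply Hu; exists n; auto).
  destruct (classic (finp y)) as [[N HN]|Hny].
  { rewrite <- HN. apply Hu'. }
  destruct (classic (finp u)) as [[K HK]|Hnu].
  - exfalso. destruct (maxfin u K HK (cutsP y)) as (x0&[N ->]&Hmax).
    + exists (dd 0 y), 0; auto.
    + intros z [n ->]; auto.
    + apply Hny. exists N. apply cutsup. intros n. apply Hmax. exists n; auto.
  - assert (y = u) as ->; [|apply le'_refl]. apply sep. intros i.
    destruct (classic (exists n k, i <= n /\ i <= k /\ dd n y = dd k u)) as [(n&k&Hin&Hik&Hnk)|Hno].
    + assert (cutPsi i y = cutPsi i (dd n y)) as -> by (rewrite C1, Nat.min_l; auto).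
      rewrite Hnk, C1, Nat.min_l; auto.
    + exfalso.
      assert (Hge : forall n, i <= n -> le' (dd n y) (dd i u)).
      { intros n Hn. destruct (Hu' n) as [Heq|[k Hk]].
        - exfalso; apply Hnu; rewrite <- Heq; apply fin_d.
        - destruct (Nat.le_gt_cases i k). { exfalso; apply Hno; eauto. }
          right. exists k. rewrite Hk, D1. f_equal; lia. }
      assert (Hall : forall n, le' (dd n y) (dd i u)).
      { intros n. destruct (Nat.le_gt_cases i n); auto. apply le'_trans with (dd i y); [|apply Hge; auto].
        right; exists n. rewrite D1; f_equal; lia. }
      destruct (maxfin (dd i u) i (eq_trans (D1 i i u) (f_equal (fun k => dd k u) (Nat.min_id i))) (cutsP y)) as (x0&[N ->]&Hmax).
      * exists (dd 0 y), 0; auto.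
      * intros z [n ->]; auto.
      * apply Hny. exists N. apply cutsup. intros n. apply Hmax. exists n; auto.
Qed.

Lemma dirlub D x : directed le' D -> is_lub le' D x -> forall n, exists d, D d /\ le' (dd n x) d.
Proof. intros [[d0 Hd0] HD] [Hub Hl] n. apply NNPP. intros Hno.
  assert (Hb : forall d, D d -> le' d (dd n x)).
  { intros d Hd. destruct (le'_cmp d (dd n x) x (Hub d Hd)) as [H|H]; auto. right; eauto.
    exfalso; apply Hno; eauto. }
  assert (Hx : dd n x = x). { apply le'_anti; [right; eauto|]. apply Hl; auto. }
  destruct (maxfin x n Hx D) as (x0&Hx0&Hmax); eauto.
  apply Hno. exists x0. split; auto. apply le'_trans with x; [right; eauto|]. apply Hl; auto.
Qed.

Definition lePhi' (a b : PhiX) := le' (m a) (m b).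

Lemma lePhi_poset : poset lePhi'.
Proof. unfold lePhi'. split; [|split].
  - intros; apply le'_refl.
  - intros; eapply le'_trans; eauto.
  - intros a b H1 H2. apply m_inj, le'_anti; auto. Qed.

Definition cutsPhi (y : PsiX) : PhiX -> Prop := fun a => exists n, a = cutPsi n y.

Lemma cutsPhi_dir y : directed lePhi' (cutsPhi y).
Proof. split. exists (cutPsi 0 y), 0; auto.
  intros a b [n ->] [k ->]. exists (cutPsi (max n k) y). split. exists (max n k); auto.
  unfold lePhi'. split; right; [exists n|exists k]; fold (dd n y) (dd k y) (dd (max n k) y); rewrite D1; f_equal; lia.
Qed.

Lemma extend (Q : Type) (leQ : Q -> Q -> Prop) (HQ : cpo leQ) (f : PhiX -> Q) (Hf : continuous lePhi' leQ f) :
  exists fh : PsiX -> Q, continuous le' leQ fh /\ (forall a, fh (m a) = f a) /\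
    (forall h, continuous le' leQ h -> (forall a, h (m a) = f a) -> forall y, h y = fh y).
Proof. destruct HQ as [HQp HQs]. destruct Hf as [Mf Lf].
  assert (Hsup : forall y, exists q, is_lub leQ (image f (cutsPhi y)) q).
  { intros y. apply HQs. apply (image_directed lePhi'); auto. apply cutsPhi_dir. }
  set (fh := fun y => proj1_sig (constructive_indefinite_description _ (Hsup y))).
  assert (Hfh : forall y, is_lub leQ (image f (cutsPhi y)) (fh y)).
  { intros y. unfold fh. destruct (constructive_indefinite_description _ (Hsup y)); auto. }
  destruct HQp as (Qr&Qt&Qa).
  assert (Hfm : forall a, fh (m a) = f a).
  { intros a. eapply lub_unique; [split; [|split]; eauto|apply Hfh|]. apply lub_of_max.
    - destruct (fin_phi a) as [N HN]. exists a. split; auto. exists N. rewrite cutPsi_m, HN; auto.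
    - intros q (a'&[n ->]&<-). apply Mf. unfold lePhi'. right. exists n. unfold dd. rewrite cutPsi_m. auto. }
  assert (Mfh : monotone le' leQ fh).
  { intros y y' [->|[n ->]]; auto. apply (proj2 (Hfh _)). intros q (a&[k ->]&<-).
    apply (proj1 (Hfh y')). exists (cutPsi (min k n) y'). split; auto. exists (min k n); auto.
    rewrite C1; auto. }
  exists fh. split; [split|split]; auto.
  - intros D x HD Hx. split.
    + intros q (d&Hd&<-). apply Mfh. apply (proj1 Hx); auto.
    + intros u Hu. apply (proj2 (Hfh x)). intros q (a&[n ->]&<-).
      destruct (dirlub D x HD Hx n) as (d&Hd&Hle).
      apply (Qt _ (fh d)); [|apply Hu; exists d; auto].
      apply (proj1 (Hfh d)). eexists; split; [|reflexivity].
      destruct Hle as [Heq|[k Hk]].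
      * exists n. rewrite <- Heq, C1, Nat.min_id; auto.
      * exists (min n k). rewrite <- C1, <- Hk, C1, Nat.min_id; auto.
  - intros h [Mh Lh] Hhm y. pose proof (Lh _ _ (cutsP_dir y) (dens y)) as H1.
    eapply lub_unique; [split; [|split]; eauto|exact H1|].
    eapply is_lub_ext; [|apply Hfh]. intros q; split.
    + intros (a&[n ->]&<-). exists (dd n y). split. exists n; auto. unfold dd; auto.
    + intros (z&[n ->]&<-). exists (cutPsi n y). split. exists n; auto. unfold dd; auto.
Qed.

Lemma m_lub D x : directed lePhi' D -> is_lub lePhi' D x -> is_lub le' (image m D) (m x).
Proof. intros HD Hx. split.
  - intros z (d&Hd&<-). apply (proj1 Hx); auto.
  - intros u Hu. destruct (fin_m x) as [N HN].
    destruct (maxfin (m x) N HN (image m D)) as (x0&(d0&Hd0&<-)&Hmax).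
    + destruct HD as [[d Hd] _]. exists (m d), d; auto.
    + intros z (d&Hd&<-). apply (proj1 Hx); auto.
    + assert (x = d0). { eapply lub_unique; [apply lePhi_poset|exact Hx|]. apply lub_of_max; auto.
        intros d Hd. apply Hmax. exists d; auto. }
      subst. apply Hu. exists d0; auto.
Qed.

Lemma part1 : exists (C : Type) (leC : C -> C -> Prop) (j : PsiX -> C),
      conservative_completion le' leC j /\ conservative_completion lePhi' leC (fun a => j (m a)).
Proof. exists (Cc le'), (leCc le'), (jj le' le'_poset). split.
  - apply Cc_conservative. apply le'_cmp.
  - apply transfer with le'.
    + apply Cc_conservative. apply le'_cmp.
    + apply m_inj.
    + intros; unfold lePhi'; tauto.
    + apply m_lub.
    + apply extend.
Qed.

Definition leF' (w w' : F PsiX + X) := exists y y', tau y = w /\ tau y' = w' /\ le' y y'.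

Lemma leF_iff w w' : leF' w w' <-> le' (tauinv w) (tauinv w').
Proof. split.
  - intros (y&y'&<-&<-&H). rewrite !tauinv_tau; auto.
  - intros H. exists (tauinv w), (tauinv w'). rewrite !tau_tauinv; auto.
Qed.

Lemma part2 : exists g : F PsiX + X -> PsiX,
      (forall y, g (tau y) = y) /\ (forall w, tau (g w) = w) /\
      continuous leF' le' g /\
      (forall z, g (sumap (fmap F m) (fun x => x) z) = m (phi z)) /\
      (forall g' : F PsiX + X -> PsiX,
          continuous leF' le' g' ->
          (forall z, g' (sumap (fmap F m) (fun x => x) z) = m (phi z)) ->
          forall w, g' w = g w).
Proof. exists tauinv. split; [apply tauinv_tau|split; [apply tau_tauinv|split; [|split]]].
  - split. intros w w' H; apply leF_iff; auto.
    intros D x HD Hx. split.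
    + intros y (w&Hw&<-). apply leF_iff. apply (proj1 Hx); auto.
    + intros u Hu. rewrite <- (tauinv_tau u). apply leF_iff. apply (proj2 Hx). intros w Hw.
      apply leF_iff. rewrite tauinv_tau. apply Hu. exists w; auto.
  - intros z. rewrite <- Hm, tauinv_tau; auto.
  - intros g' Hg' Hg'm w. rewrite <- (tau_tauinv w). generalize (tauinv w) as y. intros y.
    rewrite tauinv_tau.
    assert (Ht : continuous le' leF' tau).
    { split. intros a b H; apply leF_iff; rewrite !tauinv_tau; auto.
      intros D x HD Hx. split.
      - intros w' (d&Hd&<-). apply leF_iff; rewrite !tauinv_tau. apply (proj1 Hx); auto.
      - intros u Hu. apply leF_iff. rewrite tauinv_tau. apply (proj2 Hx). intros d Hd.
        rewrite <- (tauinv_tau d). apply leF_iff. apply Hu. exists d; auto. }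
    pose proof (cont_comp le' leF' le' tau g' Ht Hg') as [_ Lh].
    pose proof (Lh _ _ (cutsP_dir y) (dens y)) as H1.
    eapply lub_unique; [apply le'_poset|exact H1|].
    eapply is_lub_ext; [|apply dens]. intros z; split.
    + intros [n ->]. exists (dd n y). split. exists n; auto. unfold dd.
      rewrite <- (phi_phiinv (cutPsi n y)). rewrite Hm. apply Hg'm.
    + intros (z'&[n ->]&<-). exists n. unfold dd.
      rewrite <- (phi_phiinv (cutPsi n y)). rewrite Hm. apply Hg'm.
Qed.

Variables (khat : itree Sig X -> PsiX)
  (Hk : forall t, tau (khat t) = sumap (fmap F khat) (fun x => x) (sumap (eps _) (fun x => x) (tau' t))).

Lemma cut_khat n : forall s, cutPsi n (khat s) = hX eps phi (cut p' n s).
Proof. induction n as [|n IH]; intros s; [reflexivity|].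
  destruct s as [x|k σ ts].
  - change (cutPsi (S n) (khat (ILeaf x))) with
      (match tau (khat (ILeaf x)) with inl u => phi (inl (fmap F (cutPsi n) u)) | inr x => phi (inr x) end).
    rewrite Hk. simpl. reflexivity.
  - change (cutPsi (S n) (khat (INode σ ts))) with
      (match tau (khat (INode σ ts)) with inl u => phi (inl (fmap F (cutPsi n) u)) | inr x => phi (inr x) end).
    rewrite Hk. simpl. rewrite fmap_comp'. rewrite <- (proj1 Heps). simpl.
    f_equal. f_equal. f_equal. f_equal. f_equal. apply functional_extensionality. intros i. apply IH.
Qed.

Lemma khat_emb : forall t, khat (emb t) = m (hX eps phi t).
Proof. induction t as [x|k σ ts IH].
  - apply tau_inj. rewrite Hk. simpl. rewrite Hm. reflexivity.
  - apply tau_inj. rewrite Hk. simpl. rewrite Hm. simpl. f_equal.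
    rewrite <- !(proj1 Heps). simpl. f_equal. f_equal. f_equal. apply functional_extensionality. intros i. apply IH.
Qed.

Definition echoose (u : F PsiX) : HSig Sig PsiX :=
  proj1_sig (constructive_indefinite_description _ (proj2 Heps PsiX u)).
Lemma echoose_spec u : eps PsiX (echoose u) = u.
Proof. unfold echoose. destruct (constructive_indefinite_description _ _); auto. Qed.

CoFixpoint build (y : PsiX) : itree Sig X :=
  match tau y with
  | inr x => ILeaf x
  | inl u => match echoose u with existT _ n (s, v) => INode s (fun i => build (v i)) end
  end.

Lemma build_unfold y : build y = match tau y with
  | inr x => ILeaf x
  | inl u => match echoose u with existT _ n (s, v) => INode s (fun i => build (v i)) end
  end.
Proof. rewrite (iunf_eq (build y)). simpl. destruct (tau y) as [u|x]; [destruct (echoose u) as [n [s v]]|]; reflexivity. Qed.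

Lemma khat_build y : khat (build y) = y.
Proof. apply (proj2 (Htau PsiX tau) (fun y => khat (build y)) (fun y => y)).
  - intros z. rewrite Hk, build_unfold. destruct (tau z) as [u|x] eqn:Ez; [|reflexivity].
    pose proof (echoose_spec u) as Hs. destruct (echoose u) as [n [s v]]. simpl.
    rewrite <- Hs. f_equal.
    transitivity (fmap F khat (eps _ (Hmap build (existT _ n (s, v))))); [reflexivity|].
    rewrite (proj1 Heps). rewrite fmap_comp'. reflexivity.
  - intros z. destruct (tau z); simpl; auto. rewrite fmap_id; auto.
Qed.

Lemma lePsi_iff x y : cut_le eps phi p' khat x y <-> le' x y.
Proof. split.
  - intros [->|(s&s'&n&->&->&Hsim)]; [apply le'_refl|]. right. exists n.
    assert (khat s = khat (emb (cut p' n s'))).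
    { apply sep. intros k. rewrite !cut_khat. apply Hsim. }
    rewrite H, khat_emb. unfold dd. rewrite cut_khat. reflexivity.
  - intros [->|[n ->]]; [left; auto|]. right. exists (build (dd n y)), (build y), n.
    rewrite !khat_build. split; auto. split; auto. intros k.
    rewrite <- !cut_khat, khat_emb, <- cut_khat, khat_build, khat_build. unfold dd. reflexivity.
Qed.

End Main.

Theorem corollary5p14
  (F : SetFunctor) (HF : finitary F)
  (Sig : nat -> Type) (eps : forall Y : Type, HSig Sig Y -> F Y)
  (Heps : @presentation Sig F eps)
  (X : Type) (HX : inhabited X) (p' : Sig 0 + X)
  (PhiX : Type) (phi : F PhiX + X -> PhiX) (Hphi : @initial_algebra F X PhiX phi)
  (PsiX : Type) (tau : PsiX -> F PsiX + X) (Htau : @terminal_coalgebra F X PsiX tau)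
  (m : PhiX -> PsiX)
  (Hm : forall z, tau (m (phi z)) = sumap (fmap F m) (fun x => x) z)
  (khat : itree Sig X -> PsiX)
  (Hk : forall t, tau (khat t) = sumap (fmap F khat) (fun x => x) (sumap (eps _) (fun x => x) (tau' t))) :
  let lePsi := cut_le eps phi p' khat in
  let lePhi := fun a b : PhiX => lePsi (m a) (m b) in
  let leFPsi := fun w w' : F PsiX + X =>
      exists y y', tau y = w /\ tau y' = w' /\ lePsi y y' in
  (exists (C : Type) (leC : C -> C -> Prop) (j : PsiX -> C),
      conservative_completion lePsi leC j /\
      conservative_completion lePhi leC (fun a => j (m a))) /\
  (exists g : F PsiX + X -> PsiX,
      (forall y, g (tau y) = y) /\ (forall w, tau (g w) = w) /\
      continuous leFPsi lePsi g /\
      (forall z, g (sumap (fmap F m) (fun x => x) z) = m (phi z)) /\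
      (forall g' : F PsiX + X -> PsiX,
          continuous leFPsi lePsi g' ->
          (forall z, g' (sumap (fmap F m) (fun x => x) z) = m (phi z)) ->
          forall w, g' w = g w)).
Proof.
  intros lePsi lePhi leFPsi.
  assert (E1 : lePsi = le' F Sig eps X p' PhiX phi PsiX tau m).
  { apply functional_extensionality; intros x; apply functional_extensionality; intros y.
    apply propositional_extensionality. apply (lePsi_iff F HF Sig eps Heps X p' PhiX phi Hphi PsiX tau Htau m Hm khat Hk). }
  assert (E2 : lePhi = lePhi' F Sig eps X p' PhiX phi PsiX tau m).
  { unfold lePhi. rewrite E1. reflexivity. }
  assert (E3 : leFPsi = leF' F Sig eps X p' PhiX phi PsiX tau m).
  { unfold leFPsi. rewrite E1. reflexivity. }
  clearbody lePsi lePhi leFPsi. subst lePsi lePhi leFPsi.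
  split.
  - apply (part1 F HF Sig eps Heps X p' PhiX phi Hphi PsiX tau Htau m Hm).
  - apply (part2 F HF Sig eps Heps X p' PhiX phi Hphi PsiX tau Htau m Hm).
Qed.
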